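(* Under exactly the hypotheses of the preceding theorem (constants $c\in(0,1)$, $C\ge1$ with $|K^{(n)}_w(i)|\le C\binom nw(1-\frac{2w}{n})^i$ for all $n\ge1$, $0\le w\le cn$, $0\le i\le n/2$; a binary linear $[n,k]$ code $\mathcal{C}$ with $1\le k\le n-1$, generator matrix $G$ of rank $k$, dual distance $d^\perp$, $t^\perp=\lfloor (d^\perp-1)/2\rfloor$; an integer $0\le w\le cn$; $\varepsilon>0$; and a random vector $Z$ on $\mathbb{F}_2^n$ with $d_{TV}(P_{GZ},P_{U_k})\le\varepsilon$), the average absolute bias over all vectors of weight $w$ satisfies $$\frac{1}{\binom nw}\sum_{e\in\mathbb{F}_2^n:|e|=w}|\mathrm{bias}(e^\intercal Z)|\le\sqrt{\frac{|\mathcal{C}^\perp|V_n(t^\perp)}{2^{n+1}}}+\frac{\sqrt{Cn}}{2}\left(1-\frac{2w}{n}\right)^{t^\perp/2}+\sqrt{\frac\varepsilon2}.$$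
   Context: Krawtchouk polynomial: $K^{(n)}_w(i)=\sum_{j=0}^w(-1)^j\binom ij\binom{n-i}{w-j}$. Dual distance $d^\perp$: minimum Hamming weight of a nonzero vector of $\mathcal{C}^\perp$. $V_n(t)=\sum_{j=0}^t\binom nj$. For a $\{0,1\}$-valued random variable $\xi$, $\mathrm{bias}(\xi)=\frac12-\Pr(\xi=1)$. $P_{U_k}$ is uniform on $\mathbb{F}_2^k$; $d_{TV}(P,Q)=\frac12\sum_x|P(x)-Q(x)|$. *)

(* Defs.v *)
From HB Require Import structures.
From mathcomp Require Import all_boot all_order all_algebra all_field.
From mathcomp Require Import reals exp.
Set Implicit Arguments. Unset Strict Implicit. Unset Printing Implicit Defensive.
Import Order.TTheory GRing.Theory Num.Theory.
Local Open Scope ring_scope.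

Definition kraw (R : ringType) (n w i : nat) : R :=
  \sum_(j < w.+1) (-1) ^+ j * ('C(i, j))%:R * ('C(n - i, w - j))%:R.

Definition wt (n : nat) (x : 'cV['F_2]_n) : nat := #|[set i | x i 0 != 0]|.

Definition dual_code (k n : nat) (G : 'M['F_2]_(k, n)) : {set 'cV['F_2]_n} :=
  [set y | G *m y == 0].

(* dual distance: minimum weight of a nonzero dual codeword (default n if none) *)
Definition dual_dist (k n : nat) (G : 'M['F_2]_(k, n)) : nat :=
  \big[minn/n]_(y in dual_code G | y != 0) wt y.

Definition Vball (n t : nat) : nat := \sum_(j < t.+1) 'C(n, j).

Definition is_distr (R : numDomainType) (n : nat) (P : 'cV['F_2]_n -> R) : Prop :=
  (forall z, 0 <= P z) /\ \sum_z P z = 1.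

Definition pushGZ (R : ringType) (k n : nat) (G : 'M['F_2]_(k, n))
  (P : 'cV['F_2]_n -> R) (y : 'cV['F_2]_k) : R :=
  \sum_(z | G *m z == y) P z.

Definition dTV_unif (R : numFieldType) (k : nat) (Q : 'cV['F_2]_k -> R) : R :=
  2^-1 * \sum_y `|Q y - (2 ^+ k)^-1|.

Definition bias (R : numFieldType) (n : nat) (P : 'cV['F_2]_n -> R) (e : 'cV['F_2]_n) : R :=
  2^-1 - \sum_(z | (e^T *m z) 0 0 == 1) P z.

(* Main.v *)
Require Import Defs.
From HB Require Import structures.
From mathcomp Require Import all_boot all_order all_algebra all_field.
From mathcomp Require Import reals exp.
From mathcomp Require Import zify ring lra.
Import Order.TTheory GRing.Theory Num.Theory.
Set Implicit Arguments. Unset Strict Implicit. Unset Printing Implicit Defensive.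
Local Open Scope ring_scope.

Lemma F2_cases (a : 'F_2) : a = 0 \/ a = 1.
Proof. case: a => [[|[|m]] Hm]; [left|right|by []]; exact/val_inj. Qed.
Lemma F2_nat m : (m%:R : 'F_2) = (odd m)%:R.
Proof. by rewrite -modn2 Fp_nat_mod. Qed.
Lemma F2_b (a : 'F_2) : a = (a != 0)%:R.
Proof. by case: (F2_cases a) => ->. Qed.
Lemma F2_add2 (a : 'F_2) : a + a = 0.
Proof. by case: (F2_cases a) => ->; rewrite ?addr0 //; apply/eqP. Qed.

Definition supp n (x : 'cV['F_2]_n) : {set 'I_n} := [set i | x i 0 != 0].
Definition chi (R : comNzRingType) n (e x : 'cV['F_2]_n) : R :=
  if (e^T *m x) 0 0 == 1 then -1 else 1.

Lemma dot_card n (e x : 'cV['F_2]_n) : (e^T *m x) 0 0 = (#|supp e :&: supp x|)%:R.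
Proof.
rewrite !mxE.
transitivity (\sum_j ((j \in supp e :&: supp x) : nat)%:R : 'F_2).
  apply: eq_bigr => j _; rewrite mxE !inE.
  by rewrite {1}(F2_b (e j 0)) {1}(F2_b (x j 0)) -natrM mulnb.
rewrite -natr_sum -sum1_card; congr (_ %:R).
by rewrite [RHS]big_mkcond.
Qed.

Lemma chi_card (R : comNzRingType) n (e x : 'cV['F_2]_n) :
  chi R e x = (-1) ^+ #|supp e :&: supp x|.
Proof.
by rewrite /chi dot_card F2_nat -signr_odd; case: odd => /=; rewrite ?expr1 ?expr0.
Qed.

Lemma chiD (R : comNzRingType) n (e x y : 'cV['F_2]_n) :
  chi R e (x + y) = chi R e x * chi R e y.
Proof.
rewrite /chi mulmxDr mxE.
case: (F2_cases ((e^T *m x) 0 0)) => ->; case: (F2_cases ((e^T *m y) 0 0)) => -> //=;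
  rewrite ?mulr1 ?mul1r ?mulrNN ?mulr1 //.
Qed.

Lemma chi0 (R : comNzRingType) n (e : 'cV['F_2]_n) : chi R e 0 = 1.
Proof. by rewrite /chi mulmx0 mxE eq_sym oner_eq0. Qed.

Definition vecS n (A : {set 'I_n}) : 'cV['F_2]_n := \col_i (i \in A)%:R.

Lemma supp_vecS n (A : {set 'I_n}) : supp (vecS A) = A.
Proof.
apply/setP => i; rewrite inE mxE.
by case: (i \in A) => /=; rewrite ?oner_eq0 ?eqxx.
Qed.

Lemma vecS_supp n (e : 'cV['F_2]_n) : vecS (supp e) = e.
Proof. by apply/matrixP => i j; rewrite ord1 mxE inE -F2_b. Qed.

Lemma splitIU (T : finType) (X B B' : {set T}) : B \subset X -> B' \subset ~: X ->
  (B :|: B') :&: X = B /\ (B :|: B') :\: X = B'.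
Proof.
move=> /subsetP s1 /subsetP s2; split; apply/setP => i; rewrite !inE;
move: (s1 i) (s2 i); rewrite !inE;
by case: (i \in B); case: (i \in B'); case: (i \in X) => //= H1 H2;
  first [by have := H1 isT | by have := H2 isT].
Qed.

Lemma card_split n (X : {set 'I_n}) w j : (j <= w)%N ->
  #|[set A : {set 'I_n} | (#|A| == w) && (#|A :&: X| == j)]|
  = ('C(#|X|, j) * 'C(n - #|X|, w - j))%N.
Proof.
move=> jw.
set D1 := [set B : {set 'I_n} | B \subset X & #|B| == j].
set D2 := [set B : {set 'I_n} | B \subset ~: X & #|B| == (w - j)%N].
have -> : [set A : {set 'I_n} | (#|A| == w) && (#|A :&: X| == j)]
    = (fun p => p.1 :|: p.2) @: setX D1 D2.
  apply/setP => A; rewrite inE; apply/idP/imsetP.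
  - move/andP=> [/eqP hA /eqP hX]; exists (A :&: X, A :\: X); last by rewrite setID.
    rewrite inE /= !inE subsetIr hX eqxx /= setDE subsetIr /= -setDE cardsD hA hX.
    by [].
  - move=> [[B B']]; rewrite inE /= !inE => /andP[/andP[sB /eqP cB] /andP[sB' /eqP cB']] -> /=.
    have [h1 h2] := splitIU sB sB'.
    rewrite h1 cB eqxx andbT cardsU.
    have -> : B :&: B' = set0.
      by apply/setP => i; rewrite !inE; have := (subsetP sB i); have := (subsetP sB' i);
        rewrite !inE; case: (i \in B); case: (i \in B'); case: (i \in X) => //= H1 H2;
        first [by have := H1 isT | by have := H2 isT].
    by rewrite cards0 subn0 cB cB' subnKC.
rewrite card_in_imset; last first.
  move=> [B1 B1'] [B2 B2']; rewrite !inE /=.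
  move=> /and3P[/andP[s1 _] s1' _] /and3P[/andP[s2 _] s2' _] /= E.
  have [a1 b1] := splitIU s1 s1'; have [a2 b2] := splitIU s2 s2'.
  by congr pair; [rewrite -a1 E a2 | rewrite -b1 E b2].
rewrite cardsX !cards_draws; congr (_ * 'C(_, _))%N.
by rewrite cardsCs setCK card_ord.
Qed.

Lemma sum_sets (R : comNzRingType) n w (X : {set 'I_n}) :
  \sum_(A : {set 'I_n} | #|A| == w) (-1) ^+ #|A :&: X| = kraw R n w #|X|.
Proof.
rewrite (partition_big (fun A : {set 'I_n} => (inord #|A :&: X| : 'I_w.+1)) xpredT) //=.
rewrite /kraw; apply: eq_bigr => j _.
have jw : (j <= w)%N by rewrite -ltnS ltn_ord.
have cnt := card_split X jw.
rewrite (eq_bigr (fun _ => (-1) ^+ j)); last first.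
  move=> A /andP[/eqP hA /eqP hj].
  have le : (#|A :&: X| <= w)%N by rewrite -hA subset_leq_card // subsetIl.
  by rewrite -hj inordK.
rewrite sumr_const.
transitivity ((-1) ^+ j *+ #|[set A : {set 'I_n} | (#|A| == w) && (#|A :&: X| == j)]| : R).
  congr (_ *+ _); apply: eq_card => A; rewrite !inE unfold_in /=.
  case hA: (#|A| == w) => //=.
  have le : (#|A :&: X| <= w)%N by rewrite -(eqP hA) subset_leq_card // subsetIl.
  apply/eqP/eqP; first by move=> <-; rewrite inordK.
  by move=> E; apply/val_inj; rewrite /= inordK.

by rewrite cnt -mulr_natr natrM mulrA.
Qed.

Lemma wtE n (x : 'cV['F_2]_n) : wt x = #|supp x|.
Proof. by []. Qed.

Lemma sum_chi_kraw (R : comNzRingType) n w (x : 'cV['F_2]_n) :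
  \sum_(e : 'cV['F_2]_n | wt e == w) chi R e x = kraw R n w (wt x).
Proof.
rewrite wtE -sum_sets (reindex (@supp n)) /=.
  by apply: eq_bigr => e _; rewrite chi_card.
by apply: onW_bij; exists (@vecS n) => [e|A]; [rewrite vecS_supp | rewrite supp_vecS].
Qed.

Lemma wt0 n : wt (0 : 'cV['F_2]_n) = 0%N.
Proof. by apply/eqP; rewrite wtE cards_eq0; apply/eqP/setP => i; rewrite !inE mxE eqxx. Qed.

Lemma kraw0 (R : comNzRingType) n w : kraw R n w 0 = ('C(n, w))%:R.
Proof.
rewrite /kraw big_ord_recl /= big1 ?addr0 => [|j _]; last by rewrite bin0n mulr0 mul0r.
by rewrite expr0 bin0 mul1r mul1r !subn0.
Qed.

Lemma count_w (R : comNzRingType) n w :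
  \sum_(e : 'cV['F_2]_n | wt e == w) (1 : R) = ('C(n, w))%:R.
Proof.
have := sum_chi_kraw R w (0 : 'cV['F_2]_n); rewrite wt0 kraw0 => <-.
by apply: eq_bigr => e _; rewrite chi0.
Qed.

Lemma chi_one (R : comNzRingType) n (e : 'cV['F_2]_n) :
  chi R e (const_mx 1) = (-1) ^+ wt e.
Proof.
rewrite chi_card wtE; have -> : supp e :&: supp (const_mx 1) = supp e => //.
by apply/setP => i; rewrite !inE mxE oner_eq0 andbT.
Qed.

Lemma wt_compl n (x : 'cV['F_2]_n) : wt (x + const_mx 1) = (n - wt x)%N.
Proof.
rewrite !wtE.
have -> : supp (x + const_mx 1) = ~: supp x.
  apply/setP => i; rewrite !inE !mxE.
  by case: (F2_cases (x i 0)) => ->; rewrite ?add0r ?oner_eq0 ?eqxx //; apply/eqP.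
by rewrite cardsCs setCK card_ord.
Qed.

Lemma addC1K n (x : 'cV['F_2]_n) : x + const_mx 1 + const_mx 1 = x.
Proof.
rewrite -addrA; have -> : const_mx 1 + const_mx 1 = 0 :> 'cV['F_2]_n.
  by apply/matrixP => i j; rewrite !mxE F2_add2.
by rewrite addr0.
Qed.

Lemma sum_chi_compl (R : comNzRingType) n w (x : 'cV['F_2]_n) :
  \sum_(e : 'cV['F_2]_n | wt e == w) chi R e x = (-1) ^+ w * kraw R n w (n - wt x).
Proof.
rewrite -wt_compl -sum_chi_kraw mulr_sumr; apply: eq_bigr => e /eqP we.
rewrite -{1}(addC1K x) chiD chi_one we. by rewrite mulrC.
Qed.

Lemma addKF2 m p (x : 'M['F_2]_(m, p)) : x + x = 0.
Proof. by apply/matrixP => i j; rewrite !mxE F2_add2. Qed.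

Lemma norm_chi (R : realDomainType) n (e x : 'cV['F_2]_n) : `|chi R e x| = 1.
Proof. by rewrite /chi; case: ifP => _; rewrite ?normrN normr1. Qed.

Lemma wt_le n (x : 'cV['F_2]_n) : (wt x <= n)%N.
Proof. by rewrite wtE -[X in (_ <= X)%N]card_ord max_card. Qed.

Lemma Ksum_le (R : realDomainType) n w (x : 'cV['F_2]_n) :
  `|\sum_(e : 'cV['F_2]_n | wt e == w) chi R e x| <= ('C(n, w))%:R.
Proof.
rewrite -(count_w R n w); apply: le_trans (ler_norm_sum _ _ _) _.
by rewrite le_eqVlt; apply/orP; left; apply/eqP; apply: eq_bigr => e _; rewrite norm_chi.
Qed.

Lemma K_bound (R : realFieldType) (c C : R) (hC : 1 <= C)
  (hK : forall (n' w' i : nat), (1 <= n')%N -> w'%:R <= c * n'%:R -> (2 * i <= n')%N ->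
     `|kraw R n' w' i| <= C * ('C(n', w'))%:R * (1 - 2 * w'%:R / n'%:R) ^+ i)
  n w t (hn : (1 <= n)%N) (hw : w%:R <= c * n%:R)
  (hr0 : 0 <= 1 - 2 * (w%:R : R) / n%:R) (hr1 : 1 - 2 * (w%:R : R) / n%:R <= 1)
  (x : 'cV['F_2]_n) :
  `|\sum_(e : 'cV['F_2]_n | wt e == w) chi R e x|
  <= ('C(n, w))%:R * ((((wt x <= t)%N : nat)%:R : R) + (((wt (x + const_mx (1%R : 'F_2)) <= t)%N : nat)%:R : R))
     + C * ('C(n, w))%:R * (1 - 2 * w%:R / n%:R) ^+ t.
Proof.
set r := 1 - 2 * w%:R / n%:R.
have hb := Ksum_le R w x.
have h0 : 0 <= C * ('C(n, w))%:R * r ^+ t.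
  by rewrite !mulr_ge0 ?exprn_ge0 // (le_trans ler01 hC).
case: (leqP (wt x) t) => h1.
  apply: le_trans hb _; rewrite -[X in X <= _]addr0 lerD //.
  by rewrite -[X in X <= _]mulr1 ler_wpM2l // lerDl.
case: (leqP (wt (x + const_mx 1)) t) => h2.
  apply: le_trans hb _; rewrite -[X in X <= _]addr0 lerD //.
  by rewrite -[X in X <= _]mulr1 ler_wpM2l // lerDr.
rewrite add0r mulr0 add0r.
have wx := wt_le x.
rewrite wt_compl in h2.
case: (leqP (2 * wt x) n) => h3.
  rewrite sum_chi_kraw; apply: le_trans (hK _ _ _ hn hw h3) _.
  rewrite ler_wpM2l ?mulr_ge0 ?(le_trans ler01 hC) //.
  by apply: ler_wiXn2l => //; apply: ltnW.
rewrite sum_chi_compl normrM normrX normrN1 expr1n mul1r.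
have h4 : (2 * (n - wt x) <= n)%N by lia.
apply: le_trans (hK _ _ _ hn hw h4) _.
rewrite ler_wpM2l ?mulr_ge0 ?(le_trans ler01 hC) //.
by apply: ler_wiXn2l => //; apply: ltnW.
Qed.

Lemma bigmin_le (I : eqType) (r : seq I) (P : pred I) (F : I -> nat) m i0 :
  i0 \in r -> P i0 -> (\big[minn/m]_(i <- r | P i) F i <= F i0)%N.
Proof.
elim: r => //= a r IH; rewrite inE big_cons => /orP[/eqP<- ->|ir Pi].
  exact: geq_minl.
case: (P a); last exact: IH.
exact: leq_trans (geq_minr _ _) (IH ir Pi).
Qed.

Lemma wt_add n (a b : 'cV['F_2]_n) : (wt (a + b) <= wt a + wt b)%N.
Proof.
rewrite !wtE; apply: leq_trans (subset_leq_card (_ : supp (a + b) \subset supp a :|: supp b)) _.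
  apply/subsetP => i; rewrite !inE mxE.
  by case: (F2_cases (a i 0)) => ->; case: (F2_cases (b i 0)) => ->.
by rewrite cardsU leq_subr.
Qed.

Lemma wt_eq0 n (x : 'cV['F_2]_n) : wt x = 0%N -> x = 0.
Proof.
rewrite wtE => /eqP; rewrite cards_eq0 => /eqP H; apply/matrixP => i j; rewrite ord1 mxE.
have : i \notin supp x by rewrite H inE.
by rewrite inE negbK => /eqP.
Qed.

Lemma inj_ball k n (G : 'M['F_2]_(k, n)) (c0 z1 z2 : 'cV['F_2]_n) :
  (wt (c0 + z1) <= ((dual_dist G).-1)./2)%N ->
  (wt (c0 + z2) <= ((dual_dist G).-1)./2)%N -> G *m z1 = G *m z2 -> z1 = z2.
Proof.
set tp := ((dual_dist G).-1)./2 => h1 h2 E.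
set d := z1 + z2.
have Dd : d \in dual_code G by rewrite inE mulmxDr E addKF2.
have wd : (wt d <= 2 * tp)%N.
  have -> : d = (c0 + z1) + (c0 + z2) by rewrite addrACA addKF2 add0r.
  by apply: leq_trans (wt_add _ _) _; lia.
case: (eqVneq d 0) => [d0|dn0].
  by rewrite -[z2]add0r -d0 /d -addrA addKF2 addr0.
have hmin : (dual_dist G <= wt d)%N.
  by rewrite /dual_dist; apply: bigmin_le; [exact: mem_index_enum | rewrite Dd dn0].
have wpos : (0 < wt d)%N.
  by rewrite lt0n; apply/eqP => /wt_eq0 d0; move: dn0; rewrite d0 eqxx.
have h : (2 * tp <= (dual_dist G).-1)%N.
  by rewrite -[X in (_ <= X)%N](odd_double_half (dual_dist G).-1) mul2n leq_addl.
rewrite -subn1 in h; lia.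
Qed.

Lemma sum_push (R : comNzRingType) k n (G : 'M['F_2]_(k, n)) (P : 'cV['F_2]_n -> R) :
  \sum_y pushGZ G P y = \sum_z P z.
Proof.
by rewrite [RHS](partition_big (fun z : 'cV['F_2]_n => G *m z) xpredT).
Qed.

Lemma cardV m : #|{: 'cV['F_2]_m}| = (2 ^ m)%N.
Proof. by rewrite card_mx card_Fp // muln1. Qed.

Lemma cardD k n (G : 'M['F_2]_(k, n)) : (2 ^ n <= #|dual_code G| * 2 ^ k)%N.
Proof.
rewrite -!cardV.
have -> : #|{: 'cV['F_2]_n}| = (\sum_(z : 'cV['F_2]_n) 1)%N by rewrite sum1_card.
rewrite (partition_big (fun z : 'cV['F_2]_n => G *m z) xpredT) //=.
rewrite mulnC -sum_nat_const; apply: leq_sum => y _.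
rewrite sum1dep_card.
case: (pickP (fun z => G *m z == y)) => [z0 /eqP hz0 | none].
  rewrite -(card_imset _ (addIr z0)); apply: subset_leq_card.
  apply/subsetP => _ /imsetP[z hz ->]; move: hz; rewrite !inE => /eqP hz.
  by rewrite mulmxDr hz hz0 addKF2.
by rewrite eq_card0 // => z; rewrite inE none.
Qed.

Lemma count_ball (R : comNzRingType) n t (c0 : 'cV['F_2]_n) :
  \sum_(z | (wt (c0 + z) <= t)%N) (1 : R) = (Vball n t)%:R.
Proof.
rewrite (reindex (fun u => c0 + u)) /=; last first.
  by apply: onW_bij; exists (fun u => c0 + u) => u; rewrite addrA addKF2 add0r.
rewrite (eq_bigl (fun u => (wt u <= t)%N)); last by move=> u; rewrite addrA addKF2 add0r.
rewrite (partition_big (fun u => inord (wt u) : 'I_t.+1) xpredT) //=.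
rewrite /Vball natr_sum; apply: eq_bigr => j _.
rewrite -count_w; apply: eq_bigl => u.
case h: (wt u <= t)%N => /=.
  apply/eqP/eqP => [<-|E]; first by rewrite inordK.
  by apply/val_inj; rewrite /= E inordK.
apply/esym/negbTE; apply/eqP => hj; move: h; rewrite hj -ltnS ltn_ord.
by [].
Qed.

Lemma ball_mass (R : realFieldType) k n (G : 'M['F_2]_(k, n)) (P : 'cV['F_2]_n -> R)
  (hP : is_distr P) (eps : R) (hTV : dTV_unif (pushGZ G P) <= eps) (c0 : 'cV['F_2]_n) :
  \sum_(z | (wt (c0 + z) <= ((dual_dist G).-1)./2)%N) P z
  <= (#|dual_code G| * Vball n ((dual_dist G).-1)./2)%:R / 2 ^+ n + eps.
Proof.
set tp := ((dual_dist G).-1)./2.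
set Q := pushGZ G P.
set u : R := (2 ^+ k)^-1.
set B := [set z : 'cV['F_2]_n | (wt (c0 + z) <= tp)%N].
have [P0 P1] := hP.
have Q0 : forall y, 0 <= Q y by move=> y; apply: sumr_ge0 => z _; exact: P0.
have Qge : forall z, P z <= Q (G *m z).
  move=> z; rewrite /Q /pushGZ (bigD1 z) //= lerDl.
  by apply: sumr_ge0 => z' _; exact: P0.
have injB : {in B &, injective (fun z => G *m z)}.
  by move=> z1 z2; rewrite !inE => h1 h2 E; exact: inj_ball h1 h2 E.
apply: le_trans (ler_sum _ (fun z _ => Qge z)) _.
rewrite (eq_bigl (fun z => z \in B)); last by move=> z; rewrite inE.
rewrite -(big_imset Q injB) /=.
set I := [set G *m z | z in B].
set pos := fun a : R => (`|a| + a) / 2.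
have pos0 : forall a, 0 <= pos a.
  by move=> a; rewrite /pos divr_ge0 // -lerBlDr sub0r ler_normr lexx orbT.
have Qle : forall y, Q y <= u + pos (Q y - u).
  move=> y; rewrite /pos; set a := Q y - u.
  have : a <= `|a| by rewrite ler_norm.
  have -> : Q y = u + a by rewrite /a addrC subrK.
  move=> ha; rewrite lerD2l; lra.
apply: le_trans (ler_sum _ (fun y _ => Qle y)) _.
rewrite big_split /=.
have cI : #|I| = #|B| by rewrite card_in_imset.
have cB : (#|B|%:R : R) = (Vball n tp)%:R.
  transitivity (\sum_(z in B) (1 : R)); first by rewrite sumr_const.
  by rewrite -(count_ball R tp c0); apply: eq_bigl => z; rewrite inE.
rewrite sumr_const cI -[u *+ #|B|]mulr_natr cB.
have hpos : \sum_(y in I) pos (Q y - u) <= \sum_y pos (Q y - u).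
  rewrite [X in _ <= X](bigID (fun y => y \in I)) /= lerDl.
  by apply: sumr_ge0 => y _; exact: pos0.
have hsum : \sum_y pos (Q y - u) = dTV_unif Q.
  rewrite /dTV_unif /pos -mulr_suml big_split /= mulrC.
  have -> : \sum_i (Q i - u) = 0.
    rewrite sumrB sum_push P1 sumr_const cardV -[u *+ _]mulr_natr /u natrX.
    by rewrite mulVf ?subrr // expf_neq0 // pnatr_eq0.
  by rewrite addr0.
apply: lerD; last by apply: le_trans hpos _; rewrite hsum.
have hD := cardD G.
have h2k : (0 : R) < 2 ^+ k by rewrite exprn_gt0.
have h2n : (0 : R) < 2 ^+ n by rewrite exprn_gt0.
have hD' : (2 ^+ n : R) <= #|dual_code G|%:R * 2 ^+ k.
  by rewrite -(natrX R 2 n) -(natrX R 2 k) -natrM ler_nat.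
rewrite /u natrM ler_pdivlMr // mulrAC; apply: ler_wpM2r => //.
by rewrite mulrC ler_pdivrMr.
Qed.

Lemma sqrt_le (R : rcfType) (x y : R) : 0 <= y -> x <= y ^+ 2 -> Num.sqrt x <= y.
Proof.
move=> hy hx; rewrite -[y in _ <= y](ger0_norm hy) -sqrtr_sqr ler_sqrt //.
exact: sqr_ge0.
Qed.

Lemma sqrt_add3 (R : rcfType) (a b c : R) : 0 <= a -> 0 <= b -> 0 <= c ->
  Num.sqrt (a + b + c) <= Num.sqrt a + Num.sqrt b + Num.sqrt c.
Proof.
move=> ha hb hc; apply: sqrt_le; first by rewrite !addr_ge0 ?sqrtr_ge0.
rewrite -{1}(sqr_sqrtr ha) -{1}(sqr_sqrtr hb) -{1}(sqr_sqrtr hc).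
have := sqrtr_ge0 a; have := sqrtr_ge0 b; have := sqrtr_ge0 c.
set x := Num.sqrt a; set y := Num.sqrt b; set z := Num.sqrt c => hz hy hx.
have := mulr_ge0 hx hy; have := mulr_ge0 hy hz; have := mulr_ge0 hx hz.
move=> h1 h2 h3; nra.
Qed.

Lemma abs_amgm (R : realFieldType) (a l : R) : `|a| * (2 * l) <= a ^+ 2 + l ^+ 2.
Proof.
have := sqr_ge0 (`|a| - l); rewrite -(real_normK (num_real a)).
move=> h; nra.
Qed.

Lemma bias_fhat (R : realFieldType) n (P : 'cV['F_2]_n -> R) (hP : is_distr P) e :
  bias P e = 2^-1 * \sum_z P z * chi R e z.
Proof.
have [_ P1] := hP.
rewrite /bias (bigID (fun z => (e^T *m z) 0 0 == 1)) /= in P1.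
rewrite [X in _ = _ * X](bigID (fun z => (e^T *m z) 0 0 == 1)) /=.
rewrite [X in _ = _ * (X + _)](eq_bigr (fun z => - P z)); last first.
  by move=> z h; rewrite /chi h mulrN1.
rewrite [X in _ = _ * (_ + X)](eq_bigr (fun z => P z)); last first.
  by move=> z h; rewrite /chi (negbTE h) mulr1.
rewrite sumrN; move: P1.
set s1 := \sum_(i | _) P i; set s0 := \sum_(i | _) P i => P1.
have -> : s0 = 1 - s1 by rewrite -P1 addrAC subrr add0r.
by rewrite /bias -/s1; field.
Qed.

Lemma fhat_sq (R : comNzRingType) n w (P : 'cV['F_2]_n -> R) :
  \sum_(e : 'cV['F_2]_n | wt e == w) (\sum_z P z * chi R e z) ^+ 2
  = \sum_z \sum_z' P z * P z' * \sum_(e : 'cV['F_2]_n | wt e == w) chi R e (z + z').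
Proof.
transitivity (\sum_(e : 'cV['F_2]_n | wt e == w) \sum_z \sum_z' P z * P z' * chi R e (z + z')).
  apply: eq_bigr => e _; rewrite expr2 mulr_suml; apply: eq_bigr => z _.
  rewrite mulr_sumr; apply: eq_bigr => z' _.
  by rewrite chiD mulrACA.
rewrite exchange_big /=; apply: eq_bigr => z _.
rewrite exchange_big /=; apply: eq_bigr => z' _.
by rewrite mulr_sumr.
Qed.

Lemma powR_sq (R : realType) (r x : R) : 0 <= r -> powR (powR r (x / 2)) 2%:R = powR r x.
Proof.
move=> hr; rewrite -powRrM; congr powR.
by rewrite -mulrA mulVf ?mulr1 // pnatr_eq0.
Qed.

Theorem mainTheorem5 (R : realType) (c C : R)
  (hc0 : 0 < c) (hc1 : c < 1) (hC : 1 <= C)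
  (hK : forall (n' w' i : nat), (1 <= n')%N -> w'%:R <= c * n'%:R -> (2 * i <= n')%N ->
     `|kraw R n' w' i| <= C * ('C(n', w'))%:R * (1 - 2 * w'%:R / n'%:R) ^+ i)
  (n k : nat) (hk1 : (1 <= k)%N) (hkn : (k <= n - 1)%N)
  (G : 'M['F_2]_(k, n)) (hG : \rank G = k)
  (w : nat) (hw : w%:R <= c * n%:R)
  (eps : R) (heps : 0 < eps)
  (P : 'cV['F_2]_n -> R) (hP : is_distr P)
  (hTV : dTV_unif (pushGZ G P) <= eps) :
  let tp := ((dual_dist G).-1)./2 in
  ('C(n, w))%:R^-1 * \sum_(e : 'cV['F_2]_n | wt e == w) `|bias P e|
  <= Num.sqrt ((#|dual_code G| * Vball n tp)%:R / 2 ^+ n.+1)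
     + Num.sqrt (C * n%:R) / 2 * powR (1 - 2 * w%:R / n%:R) (tp%:R / 2)
     + Num.sqrt (eps / 2).
Proof.
cbv zeta; set tp := ((dual_dist G).-1)./2.
have [P0 P1] := hP.
have hn : (1 <= n)%N by lia.
have n0 : (0 : R) < n%:R by rewrite ltr0n.
have wn : (w <= n)%N.
  have : (w%:R : R) < n%:R.
    by apply: le_lt_trans hw _; rewrite -[X in _ < X]mul1r ltr_pM2r.
  by rewrite ltr_nat => /ltnW.
set b : R := ('C(n, w))%:R.
have b0 : 0 < b by rewrite ltr0n bin_gt0.
set r : R := 1 - 2 * w%:R / n%:R.
set fhat := fun e => \sum_z P z * chi R e z.
have hbias : forall e, `|bias P e| = 2^-1 * `|fhat e|.
  by move=> e; rewrite (bias_fhat hP) normrM (ger0_norm (_ : 0 <= 2^-1)) // invr_ge0 ler0n.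
have LHSE : b^-1 * \sum_(e | wt e == w) `|bias P e|
    = 2^-1 * b^-1 * \sum_(e | wt e == w) `|fhat e|.
  by rewrite (eq_bigr _ (fun e _ => hbias e)) -mulr_sumr mulrCA mulrA.
rewrite LHSE.
have sA0 : 0 <= Num.sqrt (((#|dual_code G| * Vball n tp)%:R : R) / 2 ^+ n.+1) by rewrite sqrtr_ge0.
have sE0 : 0 <= Num.sqrt (eps / 2) by rewrite sqrtr_ge0.
case: (ltnP n (2 * w)) => h2w.
  have rneg : r < 0.
    rewrite /r subr_lt0 ltr_pdivlMr // mul1r.
    by rewrite (_ : 2 * w%:R = (2 * w)%:R) ?ltr_nat // natrM.
  have pw : powR r (tp%:R / 2) = 1 by rewrite /powR lt_eqF // ln0 ?mulr0 ?expR0 // ltW.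
  rewrite -/r pw mulr1.
  have hf : forall e, `|fhat e| <= 1.
    move=> e; rewrite -P1; apply: le_trans (ler_norm_sum _ _ _) _.
    by apply: ler_sum => z _; rewrite normrM norm_chi mulr1 ger0_norm.
  have hS : \sum_(e | wt e == w) `|fhat e| <= b.
    by rewrite /b -(count_w R n w); apply: ler_sum => e _.
  have hs : 1 <= Num.sqrt (C * n%:R).
    rewrite -{1}sqrtr1 ler_sqrt ?mulr_ge0 ?(le_trans ler01 hC) ?ler0n //.
    by rewrite -[X in X <= _]mulr1 ler_pM // ler1n.
  apply: (@le_trans _ _ (2^-1)).
    rewrite -mulrA -[X in _ <= X]mulr1 ler_wpM2l ?invr_ge0 ?ler0n // ler_pdivrMl // mulr1.
    exact: hS.
  set s := Num.sqrt (C * n%:R) in hs *.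
  lra.
have hr0 : 0 <= r.
  rewrite /r subr_ge0 ler_pdivrMr // mul1r.
  by rewrite (_ : 2 * w%:R = (2 * w)%:R) ?ler_nat // natrM.
have hr1 : r <= 1.
  have : 0 <= 2 * (w%:R : R) / n%:R by rewrite divr_ge0 // mulr_ge0.
  rewrite /r; lra.
set A : R := (#|dual_code G| * Vball n tp)%:R / 2 ^+ n.
have A0 : 0 <= A by rewrite divr_ge0 // exprn_ge0.
set m := A + eps.
have hm0 : 0 < m by rewrite /m; lra.
set q := r ^+ tp.
have q0 : 0 <= q by rewrite exprn_ge0.
have Cq0 : 0 <= C * q by rewrite mulr_ge0 // (le_trans ler01 hC).
set X := 2 * m + C * q.
have hX : 0 < X by rewrite /X; lra.
have Hsq : \sum_(e | wt e == w) fhat e ^+ 2 <= b * X.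
  rewrite fhat_sq.
  apply: (@le_trans _ _ (\sum_z P z * (b * X))); last by rewrite -mulr_suml P1 mul1r.
  apply: ler_sum => z _.
  apply: (@le_trans _ _ (\sum_z' P z * (P z' * (b * ((((wt (z + z') <= tp)%N : nat)%:R : R)
           + (((wt (z + z' + const_mx (1%R : 'F_2)) <= tp)%N : nat)%:R : R)) + C * b * q)))).
    apply: ler_sum => z' _; rewrite -mulrA; apply: ler_wpM2l; first exact: P0.
    apply: ler_wpM2l; first exact: P0.
    apply: le_trans (ler_norm _) _.
    exact: (K_bound hC hK tp hn hw hr0 hr1 (z + z')).
  rewrite -mulr_sumr; apply: ler_wpM2l; first exact: P0.
  have e1 : \sum_z' P z' * (((wt (z + z') <= tp)%N : nat)%:R : R)
      = \sum_(z' | (wt (z + z') <= tp)%N) P z'.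
    by rewrite [RHS]big_mkcond; apply: eq_bigr => z' _; case: (_ <= _)%N; rewrite ?mulr1 ?mulr0.
  have e2 : \sum_z' P z' * (((wt (z + z' + const_mx (1%R : 'F_2)) <= tp)%N : nat)%:R : R)
      = \sum_(z' | (wt ((z + const_mx (1%R : 'F_2)) + z') <= tp)%N) P z'.
    rewrite [RHS]big_mkcond; apply: eq_bigr => z' _; rewrite addrAC.
    by case: (_ <= _)%N; rewrite ?mulr1 ?mulr0.
  have B1 := ball_mass hP hTV z.
  have B2 := ball_mass hP hTV (z + const_mx 1).
  rewrite -/tp -/A -/m in B1 B2.
  under eq_bigr do rewrite mulrDr mulrCA.
  rewrite big_split /= -mulr_sumr -mulr_suml P1 mul1r.
  under eq_bigr do rewrite mulrDr.
  rewrite big_split /= e1 e2 /X.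
  have h1 : b * \sum_(z' | (wt (z + z') <= tp)%N) P z' <= b * m.
    by apply: ler_wpM2l => //; exact: ltW.
  have h2 : b * \sum_(z' | (wt (z + const_mx (1%R : 'F_2) + z') <= tp)%N) P z' <= b * m.
    by apply: ler_wpM2l => //; exact: ltW.
  have -> : b * (2 * m + C * q) = b * m + b * m + C * b * q by ring.
  by rewrite mulrDr; apply: lerD => //; apply: lerD.
have Habs : \sum_(e | wt e == w) `|fhat e| <= b * Num.sqrt X.
  set l := Num.sqrt X.
  have l0 : 0 < l by rewrite sqrtr_gt0.
  have l2 : l ^+ 2 = X by rewrite sqr_sqrtr // ltW.
  rewrite -(ler_pM2r (_ : 0 < 2 * l)); last by rewrite mulr_gt0.
  rewrite mulr_suml; apply: le_trans (ler_sum _ (fun e _ => abs_amgm (fhat e) l)) _.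
  rewrite big_split /=.
  have -> : \sum_(e : 'cV['F_2]_n | wt e == w) l ^+ 2 = X * b.
    by rewrite /b -(@count_w R n w) mulr_sumr l2; apply: eq_bigr => e _; rewrite mulr1.
  have -> : b * l * (2 * l) = b * X + X * b by rewrite -l2; ring.
  by rewrite lerD.
apply: (@le_trans _ _ (2^-1 * Num.sqrt X)).
  apply: le_trans (ler_wpM2l _ Habs) _; first by rewrite mulr_ge0 // invr_ge0 ltW.
  rewrite le_eqVlt; apply/orP; left; apply/eqP; field.
  by rewrite gt_eqF.
set Y1 := (#|dual_code G| * Vball n tp)%:R / 2 ^+ n.+1.
have X4 : X = 4 * (Y1 + eps / 2 + C * q / 4).
  rewrite /X /m /A /Y1 exprS; field.
  by rewrite expf_neq0 // pnatr_eq0.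
have s4 : Num.sqrt (4 : R) = 2.
  by rewrite (_ : (4 : R) = 2 ^+ 2) ?sqrtr_sqr ?ger0_norm //; ring.
rewrite X4 sqrtrM // s4 mulrA mulVf ?pnatr_eq0 // mul1r.
apply: le_trans (sqrt_add3 _ _ _) _.
- by rewrite divr_ge0 // exprn_ge0.
- by rewrite divr_ge0 // ltW.
- by rewrite divr_ge0.
rewrite addrAC; apply: lerD => //; apply: lerD => //.
apply: sqrt_le; first by rewrite mulr_ge0 ?divr_ge0 ?sqrtr_ge0 ?powR_ge0.
rewrite exprMn -(powR_mulrn _ (powR_ge0 _ _)) powR_sq // powR_mulrn // -/q.
rewrite exprMn sqr_sqrtr ?mulr_ge0 ?ler0n ?(le_trans ler01 hC) //.
have hn1 : (1 : R) <= n%:R by rewrite ler1n.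
have h := mulr_ge0 Cq0 (_ : 0 <= n%:R - 1 :> R); rewrite subr_ge0 in h.
have := h hn1; nra.
Qed.
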